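(* Let $f,g:X\to Y$ be continuous maps, where $Y$ is endowed with a metric $d$. If $f$ and $g$ are equal at infinity, then $L(f)=L(g)$.
   Context: All topological spaces are Hausdorff, second countable and locally compact. $f$ and $g$ are equal at infinity if for every sequence $(x_n)$ in $X$ without limit points, $\lim_n d(f(x_n),g(x_n))=0$. The limit set $L(f)$ is the set of all $y\in Y$ for which there is a sequence $(x_n)$ in $X$ with no limit points in $X$ such that $f(x_n)\to y$. *)

(* Defs.v *)
From HB Require Import structures.
From mathcomp Require Import all_boot all_order all_algebra.
From mathcomp Require Import all_classical all_reals all_analysis.
Set Implicit Arguments. Unset Strict Implicit. Unset Printing Implicit Defensive.
Import Order.TTheory GRing.Theory Num.Theory numFieldTopology.Exports.
Local Open Scope classical_set_scope.
Local Open Scope ring_scope.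

Definition no_limit_points {X : topologicalType} (u : nat -> X) : Prop :=
  cluster (u @ \oo) = set0.

Definition equal_at_infinity {R : realType} {X : topologicalType}
  {Y : metricType R} (f g : X -> Y) : Prop :=
  forall u : nat -> X, no_limit_points u ->
    (fun n => mdist (f (u n)) (g (u n))) @ \oo --> (0 : R).

Definition limit_set {X Y : topologicalType} (f : X -> Y) : set Y :=
  [set y | exists u : nat -> X, no_limit_points u /\ (f \o u) @ \oo --> y].

(* Main.v *)
Require Import Defs.
From HB Require Import structures.
From mathcomp Require Import all_boot all_order all_algebra.
From mathcomp Require Import all_classical all_reals all_analysis.
Local Open Scope classical_set_scope.
Import Order.TTheory GRing.Theory Num.Theory numFieldTopology.Exports.
Local Open Scope ring_scope.

Lemma key (R : realType) (Y : metricType R) (a b : nat -> Y) (y : Y) :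
  (fun n => mdist (a n) (b n)) @ \oo --> (0 : R) ->
  a @ \oo --> y -> b @ \oo --> y.
Proof.
move=> hd ha; apply/metricType_numDomainType.cvgrPdist_lt => e e0.
have e20 : 0 < e / 2 by rewrite divr_gt0.
have H1 := metricType_numDomainType.cvgr_dist_lt ha e20.
have H2 := pseudometric_normed_Zmodule.cvgr_dist_lt _ _ hd _ e20.
near=> n.
have h2 : mdist y (a n) < e / 2 by near: n; exact: H1.
have h1 : `|0 - mdist (a n) (b n)| < e / 2 by near: n; exact: H2.
rewrite (le_lt_trans (metric_triangle _ (a n) _))//.
rewrite [e]splitr ltrD//.
move: h1; rewrite sub0r normrN => h1.
by rewrite (le_lt_trans (ler_norm _)).
Unshelve. all: by end_near.
Qed.

Theorem lemma2p1 (R : realType) (X : topologicalType) (Y : metricType R)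
  (hX : hausdorff_space X) (scX : @second_countable X)
  (lcX : locally_compact [set: X])
  (hY : hausdorff_space Y) (scY : @second_countable Y)
  (lcY : locally_compact [set: Y])
  (f g : X -> Y) (cf : continuous f) (cg : continuous g) :
  equal_at_infinity f g -> limit_set f = limit_set g.
Proof.
move=> E; apply/seteqP; split => y [u [nu cu]]; exists u; split => //.
  exact: (@key R Y (f \o u) (g \o u) y (E u nu) cu).
apply: (@key R Y (g \o u) (f \o u) y _ cu).
have Hs : (fun n => mdist (f (u n)) (g (u n))) = (fun n => mdist ((g \o u) n) ((f \o u) n)).
  by apply/funext => n; rewrite /= metric_sym.
rewrite -Hs.
exact: (E u nu).
Qed.
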